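(* Let $\langle M,\mathsf{S}\rangle$ be a sum structure. Then for all $x\in M$ and $X\subseteq M$: if $x\,\mathsf{S}_{\sqsubseteq_{\mathsf{S}}}\,X$ then $x\,\mathsf{S}\,X$.
   Context: For a set $M$ and a relation $\mathsf{S}\subseteq M\times\mathcal{P}(M)$ define: $x\sqsubseteq_{\mathsf{S}} y$ iff there is $X\subseteq M$ with $y\,\mathsf{S}\,X$ and $x\in X$; $\mathrm{I}(x)=\{y\in M\mid y\sqsubseteq_{\mathsf{S}} x\}$ and for $A\subseteq M$, $\mathrm{I}(A)=\bigcup_{a\in A}\mathrm{I}(a)$; $x$ s-overlaps $y$ iff there are $X,Y\subseteq M$ with $x\,\mathsf{S}\,X$, $y\,\mathsf{S}\,Y$, $X\cap Y\neq\emptyset$; a set $A\subseteq M$ is pre-dense in $B\subseteq M$ iff for every $b\in B$ there is $a\in A$ such that $a$ s-overlaps $b$. Overlap w.r.t. $\sqsubseteq_{\mathsf{S}}$: $x\circ y$ iff there is $z\in M$ with $z\sqsubseteq_{\mathsf{S}} x$ and $z\sqsubseteq_{\mathsf{S}} y$. The induced sum: $x\,\mathsf{S}_{\sqsubseteq_{\mathsf{S}}}\,X$ iff every $y\in X$ satisfies $y\sqsubseteq_{\mathsf{S}} x$, and for every $z\in M$ with $z\sqsubseteq_{\mathsf{S}} x$ there is $y\in X$ with $y\circ z$. A sum structure is a pair $\langle M,\mathsf{S}\rangle$ satisfying: (S1) for every non-empty $X\subseteq M$ there is $x\in M$ with $x\,\mathsf{S}\,X$; (S2) $x\,\mathsf{S}\,X\wedge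 y\,\mathsf{S}\,X\to x=y$; (S3) $x\,\mathsf{S}\,X\wedge y\,\mathsf{S}\,Y\wedge x\in Y\to y\,\mathsf{S}\,(X\cup Y)$; (S4) if $x\,\mathsf{S}\,X$, $x\,\mathsf{S}\,Y$ and $y\in Y$, then there are $z\in X$ and $Z,U\subseteq M$ with $z\,\mathsf{S}\,Z$, $y\,\mathsf{S}\,U$ and $Z\cap U\neq\emptyset$; (S5) for all $x\in M$ and $X\subseteq M$: if $X$ is pre-dense in $\mathrm{I}(x)$ then $x\,\mathsf{S}\,(\mathrm{I}(x)\cap\mathrm{I}(X))$. *)

(* Defs.v *)
(* Subsets of M are predicates M -> Prop; S ⊆ M × P(M) is S : M -> (M -> Prop) -> Prop. *)


Section SumDefs.
Context {M : Type} (S : M -> (M -> Prop) -> Prop).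

Definition partS (x y : M) : Prop := exists X : M -> Prop, S y X /\ X x.

Definition Iof (x : M) : M -> Prop := fun y => partS y x.

Definition IofSet (A : M -> Prop) : M -> Prop := fun y => exists a, A a /\ Iof a y.

Definition soverlaps (x y : M) : Prop :=
  exists X Y : M -> Prop, S x X /\ S y Y /\ exists z, X z /\ Y z.

Definition predense (A B : M -> Prop) : Prop :=
  forall b, B b -> exists a, A a /\ soverlaps a b.

Definition ovl (x y : M) : Prop := exists z, partS z x /\ partS z y.

Definition induced_sum (x : M) (X : M -> Prop) : Prop :=
  (forall y, X y -> partS y x) /\
  (forall z, partS z x -> exists y, X y /\ ovl y z).

Definition sum_structure : Prop :=
  (forall X : M -> Prop, (exists y, X y) -> exists x, S x X) /\
  (forall x y X, S x X -> S y X -> x = y) /\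
  (forall x y X Y, S x X -> S y Y -> Y x ->
              S y (fun z => X z \/ Y z)) /\
  (forall x X Y y, S x X -> S x Y -> Y y ->
              exists z, X z /\ exists Z U : M -> Prop,
                S z Z /\ S y U /\ exists w, Z w /\ U w) /\
  (forall x X, predense X (Iof x) ->
              S x (fun z => Iof x z /\ IofSet X z)).

End SumDefs.

(* Main.v *)
Require Import Defs.
From Stdlib Require Import Classical FunctionalExtensionality PropExtensionality.

Lemma S_ext (M : Type) (S : M -> (M -> Prop) -> Prop) x (A B : M -> Prop) :
  S x A -> (forall z, A z <-> B z) -> S x B.
Proof.
  intros H E. assert (A = B) as <-; [|exact H].
  apply functional_extensionality; intro z; apply propositional_extensionality; apply E.
Qed.

Theorem lemma3p11 (M : Type) (S : M -> (M -> Prop) -> Prop) :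
  sum_structure S ->
  forall (x : M) (X : M -> Prop), induced_sum S x X -> S x X.
Proof.
  intros [S1 [S2 [S3 [S4 S5]]]] x X [Hp Hc].
  assert (Tr : forall a b c, partS S a b -> partS S b c -> partS S a c).
  { intros a b c [B [HB Ha]] [C [HC Hb]].
    exists (fun z => B z \/ C z); split; [eapply S3; eauto | now left]. }
  destruct (classic (exists y, X y)) as [[y0 Hy0]|Hne].
  2:{ eapply S_ext. apply (S5 x X).
      - intros b Hb. destruct (Hc b Hb) as [y [Hy _]]. exfalso; eauto.
      - intros z; split.
        + intros [Hz _]. destruct (Hc z Hz) as [y [Hy _]]. exfalso; eauto.
        + intros Hz; exfalso; eauto. }
  destruct (S1 X (ex_intro _ y0 Hy0)) as [s Hs].
  assert (H1 : S x (fun z => Iof S x z /\ IofSet S (fun a => a = s) z)).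
  { apply S5. intros b Hb. exists s; split; [reflexivity|].
    destruct (Hc b Hb) as [y [Hy [z [Hzy Hzb]]]].
    assert (Hzs : partS S z s) by (eapply Tr; [exact Hzy| exists X; auto]).
    destruct Hzs as [Z [HZ Hz]]. destruct Hzb as [B [HB Hz']].
    exists Z, B; repeat split; auto. exists z; auto. }
  assert (H2 : S s (fun z => Iof S s z /\ IofSet S (fun a => a = x) z)).
  { apply S5. intros b [Y [HY Hb]]. exists x; split; [reflexivity|].
    destruct (S4 s X Y b Hs HY Hb) as [z [Hz [Z [U [HZ [HU [w [Hw1 Hw2]]]]]]]].
    assert (Hwx : partS S w x) by (eapply Tr; [exists Z; eauto | apply Hp; auto]).
    destruct Hwx as [W [HW Hw]].
    exists W, U; repeat split; auto. exists w; auto. }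
  assert (E : x = s).
  { eapply S2. exact H1. eapply S_ext. exact H2.
    intros z; split.
    - intros [Ha [a [-> Hb]]]. split; [exact Hb|]. exists s; split; auto.
    - intros [Ha [a [-> Hb]]]. split; [exact Hb|]. exists x; split; auto. }
  subst s. exact Hs.
Qed.
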